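(* Let $a$ be a primitive element of $GF(2^m)$, $n\le 2^m-1$, $1\le k\le d\le n-1$, $g(x)=\prod_{j=1}^{n-k}(x-a^j)=\sum_{i=0}^{n-k}g_ix^i$ and $f(x)=\prod_{j=1}^{n-d}(x-a^j)=\sum_{i=0}^{n-d}f_ix^i$. Let $G_k$ be the $k\times n$ matrix whose $r$-th row ($r=1,\dots,k$) is $(0,\dots,0,g_0,\dots,g_{n-k},0,\dots,0)$ with $r-1$ leading zeros, $B$ the $(d-k)\times n$ matrix whose $r$-th row ($r=1,\dots,d-k$) is $(0,\dots,0,f_0,\dots,f_{n-d},0,\dots,0)$ with $r-1$ leading zeros, and $G=\begin{bmatrix}G_k\\ B\end{bmatrix}$. Then $G$ is a least-update-complexity matrix.
   Context: The update complexity of a matrix is the maximum, over its rows, of the number of nonzero entries in the row. Here ''least-update-complexity'' refers to matrices of the form $\begin{bmatrix}G_k'\\ B'\end{bmatrix}$ that are generator matrices of the $[n,d]$ Reed–Solomon code generated by $f(x)$ and whose first $k$ rows $G_k'$ form a generator matrix of the $[n,k]$ Reed–Solomon code generated by $g(x)$ (the form required for the minimum-bandwidth regenerating code); $G$ has the minimum update complexity among all such matrices. A Reed–Solomon code generated by $h(x)$ is the set of vectors in $GF(2^m)^n$ whose polynomial $\sum_i c_ix^i$ is divisible by $h(x)$. *)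

(* Defs.v *)
From mathcomp Require Import all_boot all_order all_algebra.
Set Implicit Arguments. Unset Strict Implicit. Unset Printing Implicit Defensive.
Import GRing.Theory.
Local Open Scope ring_scope.

Definition poly_of_vec (F : fieldType) (n : nat) (c : 'rV[F]_n) : {poly F} :=
  \sum_(i < n) c 0 i *: 'X^i.

Definition RS_code (F : fieldType) (n : nat) (h : {poly F}) (c : 'rV[F]_n) : bool :=
  h %| poly_of_vec c.

Definition is_generator_matrix (F : fieldType) (r n : nat) (M : 'M[F]_(r, n))
  (C : 'rV[F]_n -> bool) : Prop :=
  row_free M /\ forall c : 'rV[F]_n, (c <= M)%MS = C c.

Definition update_complexity (F : fieldType) (r n : nat) (M : 'M[F]_(r, n)) : nat :=
  \max_(i < r) #|[pred j : 'I_n | M i j != 0%R]|.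

Definition admissible (F : fieldType) (n k d : nat) (g f : {poly F})
  (Gk' : 'M[F]_(k, n)) (B' : 'M[F]_(d - k, n)) : Prop :=
  is_generator_matrix (col_mx Gk' B') (RS_code f) /\
  is_generator_matrix Gk' (RS_code g).

Definition least_update_complexity (F : fieldType) (n k d : nat) (g f : {poly F})
  (Gk : 'M[F]_(k, n)) (B : 'M[F]_(d - k, n)) : Prop :=
  admissible g f Gk B /\
  forall (Gk' : 'M[F]_(k, n)) (B' : 'M[F]_(d - k, n)),
    admissible g f Gk' B' ->
    (update_complexity (col_mx Gk B) <= update_complexity (col_mx Gk' B'))%N.

Definition shift_mx (F : fieldType) (r n : nat) (p : {poly F}) : 'M[F]_(r, n) :=
  \matrix_(i < r, j < n) (if (i <= j)%N then p`_(j - i) else 0%R).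

(* Main.v *)
Require Import Defs.
From mathcomp Require Import all_boot all_order all_algebra.
From mathcomp Require Import zify ring.
Import GRing.Theory.
Local Open Scope ring_scope.

Section Pov.
Variable F : fieldType.

Lemma pov_coef n (v : 'rV[F]_n) j :
  (poly_of_vec v)`_j = \sum_(i < n) v 0 i * (j == i)%:R.
Proof. by rewrite /poly_of_vec coef_sum; apply: eq_bigr => i _; rewrite coefZ coefXn. Qed.

Lemma pov_coef_ord n (v : 'rV[F]_n) (i : 'I_n) : (poly_of_vec v)`_i = v 0 i.
Proof.
rewrite pov_coef (bigD1 i) //= eqxx mulr1 big1 ?addr0 // => l Hl.
by rewrite (_ : (i == l :> nat) = false) ?mulr0 //; apply/negbTE; rewrite eq_sym; exact: Hl.
Qed.

Lemma pov_coef_ge n (v : 'rV[F]_n) j : (n <= j)%N -> (poly_of_vec v)`_j = 0.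
Proof.
move=> Hj; rewrite pov_coef big1 // => i _.
by rewrite (_ : (j == i) = false) ?mulr0 //; apply/negbTE; rewrite neq_ltn (leq_trans (ltn_ord i) Hj) orbT.
Qed.

Lemma pov_size n (v : 'rV[F]_n) : (size (poly_of_vec v) <= n)%N.
Proof. by apply/leq_sizeP => j Hj; rewrite pov_coef_ge. Qed.

Lemma pov_inj n : injective (@poly_of_vec F n).
Proof.
move=> u v E; apply/rowP => j.
by have := congr1 (fun p : {poly F} => p`_j) E; rewrite /= !pov_coef_ord.
Qed.

Lemma pov_surj n (q : {poly F}) : (size q <= n)%N -> exists v : 'rV[F]_n, poly_of_vec v = q.
Proof.
move=> Hq; exists (\row_(j < n) q`_j); apply/polyP => j.
case: (ltnP j n) => Hj.
  by rewrite (pov_coef_ord _ _ (Ordinal Hj)) mxE.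
by rewrite pov_coef_ge // nth_default // (leq_trans Hq Hj).
Qed.

Lemma pov0 n : poly_of_vec (0 : 'rV[F]_n) = 0.
Proof. by rewrite /poly_of_vec big1 // => i _; rewrite mxE scale0r. Qed.

Lemma pov_add n (u v : 'rV[F]_n) : poly_of_vec (u + v) = poly_of_vec u + poly_of_vec v.
Proof. by rewrite /poly_of_vec -big_split; apply: eq_bigr => i _; rewrite mxE scalerDl. Qed.

Lemma pov_mul r n (x : 'rV[F]_r) (M : 'M[F]_(r, n)) :
  poly_of_vec (x *m M) = \sum_(i < r) x 0 i *: poly_of_vec (row i M).
Proof.
rewrite /poly_of_vec.
rewrite (eq_bigr (fun j => (\sum_i x 0 i * M i j) *: 'X^j)); last by move=> j _; rewrite mxE.
under eq_bigr do rewrite scaler_suml.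
rewrite exchange_big /=; apply: eq_bigr => i _.
rewrite scaler_sumr; apply: eq_bigr => j _.
by rewrite mxE scalerA.
Qed.

Lemma pov_row_shift r n (p : {poly F}) (i : 'I_r) :
  (r + size p <= n.+1)%N -> poly_of_vec (row i (shift_mx r n p)) = 'X^i * p.
Proof.
move=> Hs; apply/polyP => j; rewrite coefXnM.
case: (ltnP j n) => Hj.
  rewrite (pov_coef_ord _ _ (Ordinal Hj)) !mxE /= ltnNge; by case: (i <= j)%N.
rewrite (pov_coef_ge _ _ _ Hj).
case: ltnP => // Hij; rewrite nth_default //.
rewrite leq_subRL //.
have Hi := ltn_ord i.
apply: leq_trans Hj; rewrite -ltnS; apply: leq_trans Hs.
by rewrite -addSn leq_add2r.
Qed.

Lemma pov_shift r n (p : {poly F}) (x : 'rV[F]_r) :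
  (r + size p <= n.+1)%N -> poly_of_vec (x *m shift_mx r n p) = poly_of_vec x * p.
Proof.
move=> Hs; rewrite pov_mul (eq_bigr (fun i : 'I_r => x 0 i *: ('X^i * p))); last first.
  by move=> i _; rewrite pov_row_shift.
rewrite /poly_of_vec mulr_suml; apply: eq_bigr => i _.
by rewrite scalerAl.
Qed.


Lemma pov_col n r1 r2 (x : 'rV[F]_(r1 + r2)) (A : 'M[F]_(r1, n)) (B : 'M[F]_(r2, n)) :
  poly_of_vec (x *m col_mx A B) = poly_of_vec (lsubmx x *m A) + poly_of_vec (rsubmx x *m B).
Proof. by rewrite -{1}(hsubmxK x) mul_row_col pov_add. Qed.

Lemma genA k n (g : {poly F}) : g != 0 -> size g = (n - k).+1 -> (k <= n)%N ->
  is_generator_matrix (shift_mx k n g) (RS_code g).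
Proof.
move=> gnz Hg Hkn.
have Hs : (k + size g <= n.+1)%N by rewrite Hg; intros; lia.
split.
  apply: inj_row_free => v Hv.
  have := congr1 (@poly_of_vec F n) Hv; rewrite pov_shift // pov0 => /eqP.
  rewrite mulf_eq0 (negbTE gnz) orbF => /eqP H.
  by apply: pov_inj; rewrite H pov0.
move=> c; rewrite /RS_code; apply/idP/idP.
  by case/submxP => x ->; rewrite pov_shift //; apply: dvdp_mull.
case/dvdpP => q Hq.
have Hsq : (size q <= k)%N.
  case: (eqVneq q 0) => [->|qnz]; first by rewrite size_poly0.
  have := pov_size _ c; rewrite Hq size_mul // Hg addnS /= => H.
  by rewrite -(leq_add2r (n - k)) subnKC.
have [x Hx] := pov_surj _ _ Hsq.
by apply/submxP; exists x; apply: pov_inj; rewrite pov_shift // Hx Hq.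
Qed.

Lemma genB k d n (f h : {poly F}) : f != 0 -> h != 0 ->
  size f = (n - d).+1 -> size h = (d - k).+1 -> (k <= d)%N -> (d <= n)%N ->
  is_generator_matrix (col_mx (shift_mx k n (f * h)) (shift_mx (d - k) n f)) (RS_code f).
Proof.
move=> fnz hnz Hf Hh Hkd Hdn.
have Hg : size (f * h) = (n - k).+1 by rewrite size_mul // Hf Hh addnS /=; intros; lia.
have Hs1 : (k + size (f * h)%R <= n.+1)%N by rewrite Hg; intros; lia.
have Hs2 : (d - k + size f <= n.+1)%N by rewrite Hf; intros; lia.
split.
  apply: inj_row_free => v Hv.
  have := congr1 (@poly_of_vec F n) Hv; rewrite pov_col !pov_shift // pov0.
  set p1 := poly_of_vec (lsubmx v); set p2 := poly_of_vec (rsubmx v).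
  have -> : p1 * (f * h) + p2 * f = (p1 * h + p2) * f by ring.
  move/eqP; rewrite mulf_eq0 (negbTE fnz) orbF => /eqP H.
  have p10 : p1 = 0.
    case: (eqVneq p1 0) => // p1nz; exfalso.
    have : (size p2 <= d - k)%N by apply: pov_size.
    have -> : p2 = - (p1 * h) by apply/eqP; rewrite -addr_eq0 addrC H.
    rewrite size_polyN size_mul // Hh.
    have : (0 < size p1)%N by rewrite size_poly_gt0.
    by move=> Hp; rewrite addnS /= -[X in (_ <= X)%N]add0n leq_add2r leqNgt Hp.
  have p20 : p2 = 0 by rewrite -H p10 mul0r add0r.
  have Hl : lsubmx v = 0 by apply: pov_inj; rewrite pov0.
  have Hr : rsubmx v = 0 by apply: pov_inj; rewrite pov0.
  by rewrite -(hsubmxK v) Hl Hr row_mx0.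
move=> c; rewrite /RS_code; apply/idP/idP.
  case/submxP => x ->; rewrite pov_col !pov_shift //.
  apply: dvdp_add; apply: dvdp_mull => //; exact: dvdp_mulIl.
case/dvdpP => Q HQ.
have HsQ : (size Q <= d)%N.
  case: (eqVneq Q 0) => [->|Qnz]; first by rewrite size_poly0.
  have := pov_size _ c; rewrite HQ size_mul // Hf addnS /= => H.
  by rewrite -(leq_add2r (n - d)) subnKC.
have Hs1' : (size (Q %/ h)%R <= k)%N by rewrite size_divp // Hh /= leq_subLR (leq_trans HsQ) // subnK.
have Hs2' : (size (Q %% h)%R <= d - k)%N.
  by rewrite -ltnS -Hh ltn_modp.
have [x1 Hx1] := pov_surj _ _ Hs1'.
have [x2 Hx2] := pov_surj _ _ Hs2'.
apply/submxP; exists (row_mx x1 x2); apply: pov_inj.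
rewrite pov_col row_mxKl row_mxKr !pov_shift // Hx1 Hx2 HQ {1}(divp_eq Q h).
ring.
Qed.

Lemma pov_horner n (v : 'rV[F]_n) x : (poly_of_vec v).[x] = \sum_(i < n) v 0 i * x ^+ i.
Proof. by rewrite /poly_of_vec horner_sum; apply: eq_bigr => i _; rewrite hornerZ hornerXn. Qed.

Lemma bch_key n w (a : F) (v : 'rV[F]_n) (q : {poly F}) :
  (forall j, (1 <= j <= w)%N -> (poly_of_vec v).[a ^+ j] = 0) ->
  (size q <= w)%N ->
  \sum_(i < n) v 0 i * a ^+ i * q.[a ^+ i] = 0.
Proof.
move=> Hr Hq.
under eq_bigr do rewrite horner_coef mulr_sumr.
rewrite exchange_big /= big1 // => l _.
have -> : \sum_(i < n) v 0 i * a ^+ i * (q`_l * a ^+ i ^+ l) =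
          q`_l * (poly_of_vec v).[a ^+ l.+1].
  rewrite pov_horner mulr_sumr; apply: eq_bigr => i _.
  rewrite [in RHS]exprSr exprMn [in RHS]exprAC; ring.
rewrite Hr ?mulr0 //.
by rewrite /= (leq_trans (ltn_ord l)).
Qed.

Lemma bch N n w (a : F) (v : 'rV[F]_n) :
  N.-primitive_root a -> (n <= N)%N -> v != 0 ->
  (forall j, (1 <= j <= w)%N -> (poly_of_vec v).[a ^+ j] = 0) ->
  leq w.+1 #|[pred j : 'I_n | v 0 j != 0]|.
Proof.
move=> Ha HnN vnz Hr.
rewrite ltnNge; apply/negP => HS.
have [i0 Hi0] : exists i0, v 0 i0 != 0.
  case: (pickP [pred j : 'I_n | v 0 j != 0]) => [i0 Hi0|H0]; first by exists i0.
  case/negP: vnz; apply/eqP/rowP => j; rewrite mxE.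
  by have := H0 j; rewrite /= => /negbFE/eqP.
have N0 := prim_order_gt0 Ha.
have a0 : a != 0.
  apply/negP => /eqP a0; have := prim_expr_order Ha.
  by rewrite a0 expr0n eqn0Ngt N0 /= => /eqP; rewrite eq_sym oner_eq0.
have Hdist : forall i j : 'I_n, (a ^+ i == a ^+ j) = (i == j).
  move=> i j; rewrite (eq_prim_root_expr Ha) !modn_small //.
    exact: leq_trans (ltn_ord j) HnN.
  exact: leq_trans (ltn_ord i) HnN.
pose P := [pred s : 'I_n | (s != i0) && (v 0 s != 0)].
pose q := \prod_(s | P s) ('X - (a ^+ s)%:P).
have Hsq : size q = #|P|.+1.
  rewrite size_prod; last by move=> i _; rewrite polyXsubC_eq0.
  rewrite (eq_bigr (fun _ => 2%N)); last by move=> i _; rewrite size_XsubC.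
  have E : forall x : nat, ((x * 2).+1 - x = x.+1)%N by move=> x; lia.
  by rewrite sum_nat_const E.
have HcardS : #|[pred j : 'I_n | v 0 j != 0]| = #|P|.+1.
  by rewrite (cardD1 i0) inE Hi0.
have := @bch_key n w a v q Hr.
rewrite Hsq -HcardS => /(_ HS).
rewrite (bigD1 i0) //= big1 ?addr0.
  apply/eqP; rewrite !mulf_neq0 ?expf_neq0 //.
  rewrite horner_prod; apply/prodf_neq0 => s /andP [Hs _].
  by rewrite hornerXsubC subr_eq0 Hdist eq_sym.
move=> i Hi; case: (eqVneq (v 0 i) 0) => [->|Hv]; first by rewrite !mul0r.
rewrite horner_prod (bigD1 i) /=; last by rewrite Hi Hv.
by rewrite hornerXsubC subrr mul0r mulr0.
Qed.

Lemma card_shift r n (p : {poly F}) (i : 'I_r) :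
  leq #|[pred j : 'I_n | shift_mx r n p i j != 0]| (size p).
Proof.
case: n => [|n].
  by rewrite (leq_trans (max_card _)) // card_ord.
apply: leq_trans (_ : #|[set (inord (i + t) : 'I_n.+1) | t : 'I_(size p)]| <= _)%N; last first.
  by rewrite (leq_trans (leq_imset_card _ _)) // card_ord.
apply/subset_leq_card/subsetP => j; rewrite inE mxE.
case: leqP => [Hij Hnz|]; last by rewrite eqxx.
have Ht : (j - i < size p)%N.
  by rewrite ltnNge; apply/negP => H; rewrite nth_default // eqxx in Hnz.
apply/imsetP; exists (Ordinal Ht) => //.
by apply/val_inj; rewrite /= subnKC // inordK.
Qed.

End Pov.

Lemma size_prodX (F : fieldType) (b e : nat) (c : nat -> F) :
  size (\prod_(b <= j < e) ('X - (c j)%:P)) = (e - b).+1.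
Proof. by rewrite size_prod_XsubC size_iota. Qed.

Theorem corollary4 (F : finFieldType) (m : nat) (a : F) (n k d : nat) :
  #|F| = (2 ^ m)%N ->
  (#|F|.-1).-primitive_root a ->
  (n <= 2 ^ m - 1)%N ->
  (1 <= k)%N -> (k <= d)%N -> (d <= n - 1)%N ->
  let g := \prod_(1 <= j < (n - k).+1) ('X - (a ^+ j)%:P) in
  let f := \prod_(1 <= j < (n - d).+1) ('X - (a ^+ j)%:P) in
  least_update_complexity g f (shift_mx k n g) (shift_mx (d - k) n f).
Proof.
move=> HF Ha Hn Hk Hkd Hdn g f.
have HN : (n <= #|F|.-1)%N by rewrite HF -subn1.
have Hdn' : (d <= n)%N by lia.
pose h := \prod_((n - d).+1 <= j < (n - k).+1) ('X - (a ^+ j)%:P).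
have Hgfh : g = f * h.
  by rewrite /g /f /h -big_cat_nat //; lia.
have Hf : size f = (n - d).+1 by rewrite /f size_prodX; lia.
have Hh : size h = (d - k).+1 by rewrite /h size_prodX; lia.
have Hg : size g = (n - k).+1 by rewrite /g size_prodX; lia.
have fnz : f != 0 by rewrite -size_poly_gt0 Hf.
have hnz : h != 0 by rewrite -size_poly_gt0 Hh.
have gnz : g != 0 by rewrite -size_poly_gt0 Hg.
have HA : admissible g f (shift_mx k n g) (shift_mx (d - k) n f).
  split; last by apply: genA => //; lia.
  by rewrite Hgfh; apply: genB.
split=> // Gk' B' [_ [Hfree Hspan]].
have Hup : (update_complexity (col_mx (shift_mx k n g) (shift_mx (d - k) n f)) <= (n - k).+1)%N.
  apply/bigmax_leqP => i _.
  case: (split_ordP i) => {}i ->.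
    rewrite (eq_card (B := [pred j : 'I_n | shift_mx k n g i j != 0])); last first.
      by move=> j; rewrite !inE col_mxEu.
    by rewrite -Hg card_shift.
  rewrite (eq_card (B := [pred j : 'I_n | shift_mx (d - k) n f i j != 0])); last first.
    by move=> j; rewrite !inE col_mxEd.
  apply: leq_trans (card_shift _ _ _ _ _) _; rewrite Hf; lia.
apply: leq_trans Hup _.
pose i0 : 'I_k := Ordinal Hk.
have Hrow : row i0 Gk' != 0.
  apply/negP => /eqP H0.
  have Hinj := row_free_inj Hfree.
  have : (delta_mx 0 i0 : 'rV[F]_k) *m Gk' = 0 *m Gk' by rewrite mul0mx -H0 rowE.
  move/Hinj => /(congr1 (fun M : 'M[F]_(1, k) => M 0 i0)).
  by rewrite !mxE !eqxx /= => /eqP; rewrite oner_eq0.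
have Hcode : RS_code g (row i0 Gk') by rewrite -Hspan row_sub.
have Hbch := @bch F _ n (n - k) a (row i0 Gk') Ha HN Hrow.
have := Hbch _; clear Hbch.
move=> Hbch; apply: leq_trans (Hbch _) _.
  move=> j /andP [Hj1 Hj2].
  case/dvdpP: Hcode => q ->; rewrite hornerM; apply/eqP; rewrite mulf_eq0; apply/orP; right.
  rewrite /g horner_prod prodf_seq_eq0; apply/hasP; exists j.
    by rewrite mem_index_iota Hj1 ltnS.
  by rewrite hornerXsubC subrr eqxx.
apply: leq_trans (leq_bigmax (lshift (d - k) i0)).
by apply: eq_leq; apply: eq_card => j; rewrite !inE col_mxEu mxE.
Qed.
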